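(* Fix $x_0\in\mathbb{R}^n$ and an integer $\ell\ge1$, and consider the following iteration (Kaczmarz method with affine search). For $k=0,1,2,\ldots$: set $d_k=P(x_k)-x_k$ and $\delta_k=\|d_k\|^2$; if $\delta_k=0$, terminate and return $x_k$; otherwise set $\rho_k=\|r(x_k)\|^2$, $\gamma_k=\frac12(\rho_k+\delta_k)$, $j_k=\max\{k-\ell+1,0\}$, $V_k=(x_{j_k}-x_k,\ldots,x_{k-1}-x_k)\in\mathbb{R}^{n\times(k-j_k)}$ (empty if $k=j_k$), $M_k=(V_k,d_k)\in\mathbb{R}^{n\times(k-j_k+1)}$, let $s_k$ solve $M_k^TM_ks_k=\gamma_ke_{k-j_k+1}$ (with $e_{k-j_k+1}$ the last unit vector of $\mathbb{R}^{k-j_k+1}$), and set $x_{k+1}=x_k+M_ks_k$. Let $x^*\in\mathbb{R}^n$ satisfy $Ax^*=b$. Then either the iteration terminates and returns some $x_k$ with $Ax_k=b$, or it generates a well-defined infinite sequence $(x_k)_k$ (i.e. every $M_k^TM_k$ is invertible) such that for all $k\in\mathbb{N}$: \[x_{k+1}=\operatorname{argmin}_{\xi\in\operatorname{aff}(x_{j_k},\ldots,x_k,P(x_k))}\|\xi-x^*\|^2,\qquad \|x_k-x^*\|^2-\|x_{k+1}-x^*\|^2=\gamma_k^2\frac{\det(V_k^TV_k)}{\det(M_k^TM_k)},\] and in particular $\|x_{k+1}-x^*\|^2\le\|P(x_k)-x^*\|^2$ for all $k$.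
   Context: Let $A=(a_1,\ldots,a_m)^T\in\mathbb{R}^{m\times n}$ with rows $a_j\in\mathbb{R}^n\setminus\{0\}$, and let $b\in\mathbb{R}^m$ lie in the range of $A$. Norms are Euclidean. For $j=1,\ldots,m$ define the projectors $P_j:\mathbb{R}^n\to\mathbb{R}^n$, $P_j(x)=\big(I-\frac{a_ja_j^T}{\|a_j\|^2}\big)x+\frac{b_j}{\|a_j\|^2}a_j$ (the orthogonal projection onto $\{z:a_j^Tz=b_j\}$), and the Kaczmarz cycle $P=P_m\circ\cdots\circ P_1$. The residual $r:\mathbb{R}^n\to\mathbb{R}^m$ is defined by $r_1(x)=(a_1^Tx-b_1)/\|a_1\|$ and $r_j(x)=(a_j^T(P_{j-1}\circ\cdots\circ P_1)(x)-b_j)/\|a_j\|$ for $j=2,\ldots,m$. $\operatorname{aff}(\cdot)$ denotes the affine hull. The determinant of an empty ($0\times0$) Gram matrix is taken to be $1$. *)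

(* Defs.v *)
(* Real numbers: an arbitrary real closed field R : rcfType
   (includes the reals; only field operations, order and sqrt are used). *)
From mathcomp Require Import all_boot all_order all_algebra.
Set Implicit Arguments. Unset Strict Implicit. Unset Printing Implicit Defensive.
Import Order.TTheory GRing.Theory Num.Theory.
Local Open Scope ring_scope.

Section Kaczmarz.
Variable R : rcfType.
Variables m n : nat.

Definition sqn (p : nat) (v : 'cV[R]_p) : R := (v^T *m v) 0 0.

(* a_j as a column vector (j-th row of A, 0-indexed) *)
Definition arow (A : 'M[R]_(m, n)) (j : 'I_m) : 'cV[R]_n := (row j A)^T.

(* orthogonal projection P_j onto {z | a_j^T z = b_j} *)
Definition projP (A : 'M[R]_(m, n)) (b : 'cV[R]_m) (j : 'I_m) (x : 'cV[R]_n)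
  : 'cV[R]_n :=
  let a := arow A j in
  (1%:M - (sqn a)^-1 *: (a *m a^T)) *m x + (b j 0 / sqn a) *: a.

(* P_k o ... o P_1 (first k projectors, applied in order P_1 first) *)
Definition Pcyc (A : 'M[R]_(m, n)) (b : 'cV[R]_m) (k : nat) (x : 'cV[R]_n)
  : 'cV[R]_n :=
  foldl (fun y j => projP A b j y) x (take k (enum 'I_m)).

Definition kaczP (A : 'M[R]_(m, n)) (b : 'cV[R]_m) (x : 'cV[R]_n) : 'cV[R]_n :=
  Pcyc A b m x.

Definition resid (A : 'M[R]_(m, n)) (b : 'cV[R]_m) (x : 'cV[R]_n) : 'cV[R]_m :=
  \col_(j < m) ((((arow A j)^T *m Pcyc A b j x) 0 0 - b j 0)
                  / Num.sqrt (sqn (arow A j))).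

Definition jk (ell k : nat) : nat := k - (ell - 1).   (* = max(k-ell+1, 0) *)

Definition dk A b (x : nat -> 'cV[R]_n) (k : nat) : 'cV[R]_n :=
  kaczP A b (x k) - x k.

Definition deltak A b (x : nat -> 'cV[R]_n) k : R := sqn (dk A b x k).

Definition rhok A b (x : nat -> 'cV[R]_n) k : R := sqn (resid A b (x k)).

Definition gammak A b (x : nat -> 'cV[R]_n) k : R :=
  (rhok A b x k + deltak A b x k) / 2.

Definition Vk (ell : nat) (x : nat -> 'cV[R]_n) (k : nat)
  : 'M[R]_(n, k - jk ell k) :=
  \matrix_(i < n, c < k - jk ell k) (x (jk ell k + c)%N - x k) i 0.

Definition Mk A b (ell : nat) (x : nat -> 'cV[R]_n) (k : nat)
  : 'M[R]_(n, k - jk ell k + 1) :=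
  row_mx (Vk ell x k) (dk A b x k).

Definition elast (p : nat) : 'cV[R]_p :=
  \col_(i < p) (if (i : nat) == p.-1 then 1 else 0).

Definition sk A b ell (x : nat -> 'cV[R]_n) k : 'cV[R]_(k - jk ell k + 1) :=
  invmx ((Mk A b ell x k)^T *m Mk A b ell x k)
    *m (gammak A b x k *: elast (k - jk ell k + 1)).

Definition next_iter A b ell (x : nat -> 'cV[R]_n) k : 'cV[R]_n :=
  x k + Mk A b ell x k *m sk A b ell x k.

Definition in_aff (pts : seq 'cV[R]_n) (v : 'cV[R]_n) : Prop :=
  exists lam : nat -> R,
    \sum_(i < size pts) lam i = 1 /\
    v = \sum_(i < size pts) lam i *: pts`_i.

Definition aff_pts A b ell (x : nat -> 'cV[R]_n) k : seq 'cV[R]_n :=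
  rcons [seq x (jk ell k + c)%N | c <- iota 0 (k - jk ell k).+1]
        (kaczP A b (x k)).

End Kaczmarz.

(* Main.v *)
Require Import Defs.
From mathcomp Require Import all_boot all_order all_algebra.
From mathcomp Require Import ring lra.
Set Implicit Arguments. Unset Strict Implicit. Unset Printing Implicit Defensive.
Import Order.TTheory GRing.Theory Num.Theory.
Local Open Scope ring_scope.



Section Basics.
Variable R : rcfType.

Definition dot p (u v : 'cV[R]_p) : R := (u^T *m v) 0 0.

Lemma dotE p (u v : 'cV[R]_p) : dot u v = \sum_i u i 0 * v i 0.
Proof. by rewrite /dot mxE; apply: eq_bigr => i _; rewrite mxE. Qed.

Lemma dotC p (u v : 'cV[R]_p) : dot u v = dot v u.
Proof. by rewrite !dotE; apply: eq_bigr => i _; rewrite mulrC. Qed.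

Lemma dotDl p (u w v : 'cV[R]_p) : dot (u + w) v = dot u v + dot w v.
Proof. by rewrite !dotE -big_split; apply: eq_bigr => i _; rewrite mxE mulrDl. Qed.

Lemma dotDr p (u w v : 'cV[R]_p) : dot v (u + w) = dot v u + dot v w.
Proof. by rewrite ![dot v _]dotC dotDl. Qed.

Lemma dotNl p (u v : 'cV[R]_p) : dot (- u) v = - dot u v.
Proof. by rewrite !dotE -sumrN; apply: eq_bigr => i _; rewrite mxE mulNr. Qed.

Lemma dotNr p (u v : 'cV[R]_p) : dot v (- u) = - dot v u.
Proof. by rewrite ![dot v _]dotC dotNl. Qed.

Lemma dotBl p (u w v : 'cV[R]_p) : dot (u - w) v = dot u v - dot w v.
Proof. by rewrite dotDl dotNl. Qed.

Lemma dotBr p (u w v : 'cV[R]_p) : dot v (u - w) = dot v u - dot v w.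
Proof. by rewrite dotDr dotNr. Qed.

Lemma dotZl p a (u v : 'cV[R]_p) : dot (a *: u) v = a * dot u v.
Proof. by rewrite !dotE mulr_sumr; apply: eq_bigr => i _; rewrite mxE mulrA. Qed.

Lemma dotZr p a (u v : 'cV[R]_p) : dot v (a *: u) = a * dot v u.
Proof. by rewrite ![dot v _]dotC dotZl. Qed.

Lemma dot0l p (v : 'cV[R]_p) : dot 0 v = 0.
Proof. by rewrite dotE big1 // => i _; rewrite mxE mul0r. Qed.

Lemma dot0r p (v : 'cV[R]_p) : dot v 0 = 0.
Proof. by rewrite dotC dot0l. Qed.

Lemma dot_suml p (I : finType) (F : I -> 'cV[R]_p) v :
  dot (\sum_i F i) v = \sum_i dot (F i) v.
Proof.
elim/big_rec2: _ => [|i y1 y2 _ <-]; first exact: dot0l.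
by rewrite dotDl.
Qed.

Lemma sqnE p (u : 'cV[R]_p) : sqn u = dot u u.
Proof. by []. Qed.

Lemma sqn_ge0 p (u : 'cV[R]_p) : 0 <= sqn u.
Proof. by rewrite sqnE dotE sumr_ge0 // => i _; rewrite -expr2 sqr_ge0. Qed.

Lemma sqn_eq0 p (u : 'cV[R]_p) : (sqn u == 0) = (u == 0).
Proof.
apply/idP/idP => [|/eqP->]; last by rewrite sqnE dot0l.
rewrite sqnE dotE psumr_eq0 => [/allP H|i _]; last by rewrite -expr2 sqr_ge0.
apply/eqP/matrixP => i j; rewrite ord1 mxE.
have /H : i \in index_enum 'I_p by rewrite mem_index_enum.
by rewrite /= -expr2 sqrf_eq0 => /eqP.
Qed.

Lemma sqnD p (u v : 'cV[R]_p) : sqn (u + v) = sqn u + sqn v + (dot u v) *+ 2.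
Proof. rewrite !sqnE !dotDl !dotDr (dotC v u); rewrite mulr2n; lra. Qed.

Lemma dot_mul p q (M : 'M[R]_(p, q)) s w : dot (M *m s) w = dot s (M^T *m w).
Proof. by rewrite /dot trmx_mul mulmxA. Qed.

Lemma dot_col p q (M : 'M[R]_(p, q)) c w : (M^T *m w) c 0 = dot (col c M) w.
Proof. by rewrite dotE mxE; apply: eq_bigr => i _; rewrite !mxE. Qed.


End Basics.



Section Kacz.
Variable R : rcfType.
Variables m n : nat.
Variables (A : 'M[R]_(m, n)) (b : 'cV[R]_m) (xstar : 'cV[R]_n).
Hypothesis hrow : forall j : 'I_m, row j A != 0.
Hypothesis hA : A *m xstar = b.

Lemma arow_dot j (y : 'cV[R]_n) : (A *m y) j 0 = dot (arow A j) y.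
Proof. by rewrite dotE mxE; apply: eq_bigr => i _; rewrite !mxE. Qed.

Lemma b_dot j : b j 0 = dot (arow A j) xstar.
Proof. by rewrite -hA arow_dot. Qed.

Lemma sqn_arow_gt0 j : 0 < sqn (arow A j).
Proof.
rewrite lt_def sqn_ge0 andbT sqn_eq0 /arow.
apply: contra (hrow j) => /eqP H; apply/eqP.
by rewrite -[row j A]trmxK H; apply/matrixP => i k; rewrite !mxE.
Qed.

Lemma projP_eq j y : projP A b j y =
  y - ((dot (arow A j) y - b j 0) / sqn (arow A j)) *: arow A j.
Proof.
rewrite /projP mulmxBl mul1mx -scalemxAl -mulmxA.
rewrite [(arow A j)^T *m y]mx11_scalar mul_mx_scalar -/(dot _ _).
rewrite scalerA -addrA; congr (_ + _).
rewrite -!scaleNr -scalerDl; congr (_ *: _).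
rewrite mulrBl mulrC; ring.
Qed.

Lemma projP_pyth j y :
  sqn (y - xstar) = sqn (projP A b j y - xstar)
     + ((dot (arow A j) y - b j 0) / Num.sqrt (sqn (arow A j))) ^+ 2.
Proof.
have s0 := sqn_arow_gt0 j.
set a := arow A j; set s := sqn a.
rewrite projP_eq -/a -/s.
set c := dot a y - b j 0.
have -> : y - c / s *: a - xstar = (y - xstar) + (- (c / s)) *: a.
  by rewrite scaleNr addrAC.
rewrite [sqn (_ + _ *: _)]sqnD [sqn (_ *: _)]sqnE dotZl !dotZr -sqnE -/s.
have -> : dot (y - xstar) a = c by rewrite dotBl /c b_dot -/a !(dotC a).
rewrite expr_div_n sqr_sqrtr ?ltW // -/s.
field; by rewrite gt_eqF.
Qed.

Lemma Pcyc0 y : Pcyc A b 0 y = y.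
Proof. by rewrite /Pcyc take0. Qed.

Lemma PcycS k (hk : (k < m)%N) y :
  Pcyc A b k.+1 y = projP A b (Ordinal hk) (Pcyc A b k y).
Proof.
rewrite /Pcyc (take_nth (Ordinal hk)) ?size_enum_ord // foldl_rcons.
by congr projP; apply/val_inj; rewrite /= nth_enum_ord.
Qed.

Lemma resid_val y j : resid A b y j 0 =
  (dot (arow A j) (Pcyc A b j y) - b j 0) / Num.sqrt (sqn (arow A j)).
Proof. by rewrite mxE. Qed.

Lemma Pcyc_sum y k : (k <= m)%N ->
  sqn (y - xstar) = sqn (Pcyc A b k y - xstar)
     + \sum_(j < m | (j < k)%N) (resid A b y j 0) ^+ 2.
Proof.
elim: k => [_|k IH hk].
  by rewrite Pcyc0 big_pred0 ?addr0 // => i.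
rewrite IH ?(ltnW hk) // (PcycS hk) (projP_pyth (Ordinal hk)) -addrA.
congr (_ + _).
rewrite [in RHS](bigD1 (Ordinal hk)) //= resid_val /=; congr (_ + _).
apply: eq_bigl => i; by rewrite ltnS -val_eqE /= ltn_neqAle andbC.
Qed.

Lemma rho_eq y : sqn (resid A b y) = sqn (y - xstar) - sqn (kaczP A b y - xstar).
Proof.
rewrite (Pcyc_sum y (leqnn m)) /kaczP addrAC subrr add0r sqnE dotE.
by apply: eq_big => // i; rewrite ?ltn_ord // => _; rewrite expr2.
Qed.

Lemma gamma_eq y : dot (kaczP A b y - y) (xstar - y) =
  (sqn (resid A b y) + sqn (kaczP A b y - y)) / 2.
Proof.
rewrite rho_eq.
have -> : kaczP A b y - xstar = (y - xstar) + (kaczP A b y - y).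
  by rewrite (addrC (y - xstar)) addrA subrK.
rewrite [sqn (y - xstar + _)]sqnD.
have -> : xstar - y = - (y - xstar) by rewrite opprB.
rewrite dotNr (dotC (kaczP A b y - y)) mulr2n; field; done.
Qed.

Lemma term_sol y : sqn (kaczP A b y - y) = 0 -> A *m y = b.
Proof.
move/eqP; rewrite sqn_eq0 subr_eq0 => /eqP hP.
have hr : sqn (resid A b y) = 0 by rewrite rho_eq hP subrr.
have hrj : forall j : 'I_m, resid A b y j 0 = 0.
  move=> j; move: hr; rewrite sqnE dotE => /eqP; rewrite psumr_eq0; last first.
    by move=> i _; rewrite -expr2 sqr_ge0.
  move/allP/(_ j (mem_index_enum _)) => /=; rewrite -expr2 sqrf_eq0.
  by move/eqP.
have key : forall k, (k <= m)%N -> Pcyc A b k y = y.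
  elim=> [|k IH hk]; first by rewrite Pcyc0.
  rewrite (PcycS hk) IH ?(ltnW hk) // projP_eq.
  have := hrj (Ordinal hk); rewrite resid_val /= IH ?(ltnW hk) //.
  move/eqP; rewrite mulf_eq0 invr_eq0 sqrtr_eq0 leNgt sqn_arow_gt0 orbF.
  by move/eqP => ->; rewrite mul0r scale0r subr0.
apply/matrixP => j k; rewrite ord1 arow_dot.
have := hrj j; rewrite resid_val key ?(ltnW (ltn_ord j)) //.
move/eqP; rewrite mulf_eq0 invr_eq0 sqrtr_eq0 leNgt sqn_arow_gt0 orbF subr_eq0.
by move/eqP.
Qed.

End Kacz.



Section Abstract.
Variable R : rcfType.

Lemma dot_colmx p q (u1 v1 : 'cV[R]_p) (u2 v2 : 'cV[R]_q) :
  dot (col_mx u1 u2) (col_mx v1 v2) = dot u1 v1 + dot u2 v2.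
Proof. by rewrite /dot tr_col_mx mul_row_col mxE. Qed.

Lemma dot11 (u v : 'cV[R]_1) : dot u v = u 0 0 * v 0 0.
Proof. by rewrite dotE big_ord1. Qed.

Lemma sqnN p (u : 'cV[R]_p) : sqn (- u) = sqn u.
Proof. by rewrite !sqnE dotNl dotNr opprK. Qed.

Lemma gram_unit p q (M : 'M[R]_(p, q)) :
  (forall c : 'cV[R]_q, M *m c = 0 -> c = 0) -> M^T *m M \in unitmx.
Proof.
move=> hM; rewrite -row_free_unit -kermx_eq0; apply/negPn/negP.
case/rowV0Pn => v /sub_kermxP hv; apply/negP; rewrite negbK.
have hG : M^T *m M *m v^T = 0.
  by rewrite -[M^T *m M]trmxK trmx_mul trmxK -trmx_mul hv trmx0.
have : sqn (M *m v^T) = 0.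
  by rewrite sqnE dot_mul mulmxA hG dot0r.
move/eqP; rewrite sqn_eq0 => /eqP /hM hv0.
by rewrite -[v]trmxK hv0 trmx0.
Qed.

Lemma schur p q (AA : 'M[R]_p) (B : 'M[R]_(p, q)) C (D : 'M[R]_q) :
  AA \in unitmx ->
  \det (block_mx AA B C D) = \det AA * \det (D - C *m invmx AA *m B).
Proof.
move=> hA.
have -> : block_mx AA B C D =
  block_mx 1%:M 0 (C *m invmx AA) 1%:M *m block_mx AA B 0 (D - C *m invmx AA *m B).
  rewrite mulmx_block !mul1mx !mul0mx ?mulmx0 !addr0 ?add0r.
  by rewrite -mulmxA mulVmx // mulmx1 (addrC (C *m invmx AA *m B)) subrK.
by rewrite det_mulmx det_lblock det_ublock !det1 !mul1r.
Qed.

Variable n : nat.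

Lemma tele_orth (y : nat -> 'cV[R]_n) w a N : (a <= N)%N ->
  (forall s, (a <= s < N)%N -> dot (y s - y s.+1) w = 0) ->
  dot (y a - y N) w = 0.
Proof.
elim: N => [|N IH].
  by rewrite leqn0 => /eqP -> _; rewrite subrr dot0l.
rewrite leq_eqVlt => /orP [/eqP -> _|]; first by rewrite subrr dot0l.
rewrite ltnS => haN H.
have -> : y a - y N.+1 = (y a - y N) + (y N - y N.+1) by rewrite addrA subrK.
rewrite dotDl IH // ?H ?addr0 ?haN ?leqnn // => s /andP [h1 h2].
by apply: H; rewrite h1 ltnW.
Qed.

Lemma indep K (y : nat -> 'cV[R]_n) :
  (forall p q, (p < q < K)%N -> dot (y p - y p.+1) (y q - y q.+1) = 0) ->
  (forall q, (q < K)%N -> y q != y q.+1) ->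
  forall c : 'cV[R]_K, \sum_(t < K) c t 0 *: (y t - y K) = 0 -> c = 0.
Proof.
elim: K y => [|K IH] y horth hnz c hc.
  by apply/matrixP => [[]].
rewrite big_ord_recl /= in hc.
set u0 := y 0%N - y 1%N.
have h0 : forall t : 'I_K, dot (y (bump 0 t) - y K.+1) u0 = 0.
  move=> t; apply: tele_orth => //; first by rewrite /bump leq0n add1n; exact: ltnW (ltn_ord t).
  move=> s /andP [h1 h2]; rewrite dotC; apply: horth.
  by rewrite h2 andbT (leq_trans _ h1).
have hc0 : c 0 0 = 0.
  have := congr1 (fun v => dot v u0) hc.
  rewrite dotDl dot_suml big1; last by move=> t _; rewrite dotZl h0 mulr0.
  rewrite addr0 dot0l dotZl.
  have -> : y 0%N - y K.+1 = u0 + (y 1%N - y K.+1) by rewrite addrA subrK.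
  rewrite dotDl (tele_orth (w := u0)) //; last first.
    move=> s /andP [h1 h2]; rewrite dotC; apply: horth; by rewrite h2 h1.
  rewrite addr0 => /eqP; rewrite mulf_eq0 -sqnE sqn_eq0 subr_eq0 (negbTE (hnz 0%N _)) //.
  by rewrite orbF => /eqP.
pose c' : 'cV[R]_K := \col_(t < K) c (lift 0 t) 0.
have hc' : c' = 0.
  apply: (IH (fun t => y t.+1)).
  - by move=> p q hpq; apply: horth.
  - by move=> q hq; apply: hnz.
  move: hc; rewrite hc0 scale0r add0r => hc; rewrite -[X in _ = X]hc.
  by apply: eq_bigr => t _; rewrite mxE.
apply/matrixP => i j; rewrite ord1 mxE.
case: i => [[|i] hi].
  by rewrite (_ : Ordinal hi = 0) ?hc0 //; apply/val_inj.
have hi' : (i < K)%N by [].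
have := congr1 (fun M : 'cV[R]_K => M (Ordinal hi') 0) hc'; rewrite !mxE => <-.
by congr (c _ 0); apply/val_inj.
Qed.

Lemma aff_of (pts : seq 'cV[R]_n) p (mu : nat -> R) : (p < size pts)%N ->
  in_aff pts (pts`_p + \sum_(i < size pts) mu i *: (pts`_i - pts`_p)).
Proof.
move=> hp; set S := \sum_(j < size pts) mu j.
exists (fun i => mu i + (if i == p then 1 - S else 0)).
split.
  rewrite big_split /= -/S (bigD1 (Ordinal hp)) //= eqxx big1 ?addr0.
    by rewrite addrC subrK.
  by move=> i /negbTE; rewrite -val_eqE /= => ->.
apply/esym; rewrite (eq_bigr (fun i : 'I_(size pts) => mu i *: pts`_i
   + (if (i : nat) == p then 1 - S else 0) *: pts`_i));
  last by move=> i _; rewrite /= scalerDl.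
rewrite big_split /= [X in _ + X](bigD1 (Ordinal hp)) //= eqxx [X in _ + (_ + X)]big1 ?addr0; last first.
  by move=> i /negbTE; rewrite -val_eqE /= => ->; rewrite scale0r.
rewrite [in RHS](eq_bigr (fun i : 'I_(size pts) => mu i *: pts`_i - mu i *: pts`_p));
  last by move=> i _; rewrite scalerBr.
by rewrite sumrB -scaler_suml -/S scalerBl scale1r addrCA.
Qed.

Lemma aff_min (pts : seq 'cV[R]_n) z y xs xi :
  (forall i, (i < size pts)%N -> dot (pts`_i - z) (xs - y) = 0) ->
  dot (y - z) (xs - y) = 0 -> in_aff pts xi ->
  sqn (y - xs) <= sqn (xi - xs).
Proof.
move=> hp hy [lam [hs hxi]].
have hxz : xi - z = \sum_(i < size pts) lam i *: (pts`_i - z).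
  rewrite (eq_bigr (fun i : 'I_(size pts) => lam i *: pts`_i - lam i *: z));
    last by move=> i _; rewrite scalerBr.
  by rewrite sumrB -scaler_suml hs scale1r hxi.
have h1 : dot (xi - z) (xs - y) = 0.
  rewrite hxz dot_suml big1 // => i _; by rewrite dotZl hp ?mulr0.
have h2 : dot (xi - y) (xs - y) = 0.
  have -> : xi - y = (xi - z) - (y - z) by rewrite opprB addrA subrK.
  by rewrite dotBl h1 hy subrr.
have -> : xi - xs = (xi - y) + (y - xs) by rewrite addrA subrK.
rewrite sqnD.
have -> : y - xs = - (xs - y) by rewrite opprB.
rewrite dotNr h2 oppr0 mul0rn addr0 sqnN lerDr; exact: sqn_ge0.
Qed.

End Abstract.



Section Main.
Variable R : rcfType.
Variables m n : nat.
Variables (A : 'M[R]_(m, n)) (b : 'cV[R]_m) (ell : nat) (xstar : 'cV[R]_n).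
Variable x : nat -> 'cV[R]_n.
Hypothesis hrow : forall j : 'I_m, row j A != 0.
Hypothesis hA : A *m xstar = b.
Hypothesis hx : forall k, x k.+1 = next_iter A b ell x k.

Lemma jk_le k : (jk ell k <= k)%N.
Proof. exact: leq_subr. Qed.

Lemma jkK k : (jk ell k + (k - jk ell k) = k)%N.
Proof. exact: subnKC (jk_le k). Qed.

Lemma jk_mono i k : (i <= k)%N -> (jk ell i <= jk ell k)%N.
Proof. by move=> h; rewrite /jk leq_sub2r. Qed.

Lemma colV k (c : 'I_(k - jk ell k)) :
  col c (Vk ell x k) = x (jk ell k + c)%N - x k.
Proof. by apply/matrixP => i j; rewrite ord1 !mxE. Qed.

Lemma Vsum k (c : 'cV[R]_(k - jk ell k)) :
  Vk ell x k *m c = \sum_(t < k - jk ell k) c t 0 *: (x (jk ell k + t)%N - x k).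
Proof.
apply/matrixP => i j; rewrite ord1 !mxE summxE; apply: eq_bigr => t _.
by rewrite !mxE mulrC.
Qed.

Lemma size_pts k : size (aff_pts A b ell x k) = (k - jk ell k).+2.
Proof. by rewrite /aff_pts size_rcons size_map size_iota. Qed.

Lemma nth_pts k i : (i <= k - jk ell k)%N ->
  (aff_pts A b ell x k)`_i = x (jk ell k + i)%N.
Proof.
move=> hi; rewrite /aff_pts nth_rcons size_map size_iota ltnS hi.
by rewrite (nth_map 0%N) ?size_iota ?ltnS // nth_iota ?ltnS // add0n.
Qed.

Lemma nth_ptsl k : (aff_pts A b ell x k)`_(k - jk ell k).+1 = kaczP A b (x k).
Proof. by rewrite /aff_pts nth_rcons size_map size_iota ltnn eqxx. Qed.


Lemma step k : deltak A b x k != 0 ->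
  (forall c : 'cV[R]_(k - jk ell k), Vk ell x k *m c = 0 -> c = 0) ->
  (Vk ell x k)^T *m (xstar - x k) = 0 ->
  ((Mk A b ell x k)^T *m Mk A b ell x k \in unitmx) /\
  x k.+1 != x k /\
  (forall j, (jk ell k <= j <= k.+1)%N -> dot (x j - x k.+1) (xstar - x k.+1) = 0) /\
  (in_aff (aff_pts A b ell x k) (x k.+1) /\
   (forall xi, in_aff (aff_pts A b ell x k) xi ->
          sqn (x k.+1 - xstar) <= sqn (xi - xstar))) /\
  sqn (x k - xstar) - sqn (x k.+1 - xstar)
    = gammak A b x k ^+ 2 * \det ((Vk ell x k)^T *m Vk ell x k)
       / \det ((Mk A b ell x k)^T *m Mk A b ell x k).
Proof.
move=> hd hV hVe.
set K := (k - jk ell k)%N.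
set V := Vk ell x k; set d := dk A b x k; set g := gammak A b x k.
set M := Mk A b ell x k.
have hM : M = row_mx V d by [].
set G := M^T *m M.
have hg : 0 < g.
  rewrite /g /gammak divr_gt0 //.
  have := sqn_ge0 (resid A b (x k)); have : 0 < deltak A b x k.
    by rewrite lt_def hd sqn_ge0.
  rewrite /rhok; lra.
have hdg : d^T *m (xstar - x k) = g%:M.
  by rewrite [LHS]mx11_scalar; congr (_%:M); exact: (gamma_eq hrow hA).
have hMe : M^T *m (xstar - x k) = col_mx 0 (g%:M).
  by rewrite hM tr_row_mx mul_col_mx hVe hdg.
have hel : g *: elast R (k - jk ell k + 1)%N = col_mx 0 (g%:M).
  apply/matrixP => i j; rewrite ord1 mxE.
  case: (split_ordP i) => i' ->; rewrite ?col_mxEu ?col_mxEd !mxE /= addn1 /=.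
    by rewrite (ltn_eqF (ltn_ord i')) mulr0.
  by rewrite ord1 /= addn0 eqxx mulr1.
have hG : G \in unitmx.
  apply: gram_unit => c hc.
  rewrite -[c]vsubmxK in hc *.
  have h2 : dsubmx c = 0.
    have := congr1 (fun v => dot v (xstar - x k)) hc.
    rewrite /= dot0l dot_mul hMe dot_colmx dot0r add0r dot11 [g%:M 0 0]mxE eqxx mulr1n.
    move/eqP; rewrite mulf_eq0 (gt_eqF hg) orbF => /eqP h.
    by apply/matrixP => i j; rewrite !ord1 h mxE.
  rewrite h2 in hc *; move: hc; rewrite hM mul_row_col mulmx0 addr0 => /hV ->.
  by rewrite col_mx0.
have hsG : G *m sk A b ell x k = col_mx 0 (g%:M).
  by rewrite /sk -/g hel mulKVmx.
set s := sk A b ell x k.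
have hx1 : x k.+1 = x k + M *m s by rewrite hx.
have he1 : xstar - x k.+1 = (xstar - x k) - M *m s by rewrite hx1 opprD addrA.
have hMe1 : M^T *m (xstar - x k.+1) = 0.
  by rewrite he1 mulmxBr mulmxA -/G hsG hMe subrr.
have [hVe1 hde1] : V^T *m (xstar - x k.+1) = 0 /\ d^T *m (xstar - x k.+1) = 0.
  by move: hMe1; rewrite hM tr_row_mx mul_col_mx -col_mx0 => /eq_col_mx.
have hMs : dot (M *m s) (xstar - x k.+1) = 0 by rewrite dot_mul hMe1 dot0r.
have hcol : forall j, (jk ell k <= j <= k)%N -> dot (x j - x k) (xstar - x k.+1) = 0.
  move=> j /andP [h1 h2]; case: (ltngtP j k) h2 => // [hjk _|-> _]; last first.
    by rewrite subrr dot0l.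
  have hc : (j - jk ell k < K)%N by rewrite /K ltn_sub2r // (leq_ltn_trans h1).
  have := dot_col V (Ordinal hc) (xstar - x k.+1).
  by rewrite hVe1 mxE colV /= subnKC // => <-.
have hj : forall j, (jk ell k <= j <= k.+1)%N -> dot (x j - x k.+1) (xstar - x k.+1) = 0.
  move=> j /andP [h1 h2]; case: (ltngtP j k.+1) h2 => // [hjk _|-> _]; last first.
    by rewrite subrr dot0l.
  have -> : x j - x k.+1 = (x j - x k) - M *m s by rewrite hx1 opprD addrA.
  by rewrite dotBl hMs hcol ?subrr // h1.
have hneq : x k.+1 != x k.
  apply/eqP => heq.
  have hMs0 : M *m s = 0.
    have : x k + M *m s - x k = 0 by rewrite -hx1 heq subrr.
    by rewrite addrC addKr.
  have : col_mx (0 : 'cV[R]_K) (g%:M) = 0 by rewrite -hsG /G -mulmxA hMs0 mulmx0.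
  rewrite -col_mx0 => /eq_col_mx [_ /(congr1 (fun M : 'cV[R]_1 => M 0 0))].
  by rewrite !mxE eqxx mulr1n => h; move: hg; rewrite h ltxx.
have hMsplit : M *m s = V *m usubmx s + d *m dsubmx s.
  by rewrite -{1}[s]vsubmxK hM mul_row_col.
split => //; split => //; split => //; split; first split.
  have hK : (aff_pts A b ell x k)`_K = x k by rewrite nth_pts // /K jkK.
  pose mu := fun i : nat => match (insub i : option 'I_K) with
     | Some t => usubmx s t 0 | None => if i == K.+1 then dsubmx s 0 0 else 0 end.
  have -> : x k.+1 = (aff_pts A b ell x k)`_K + \sum_(i < size (aff_pts A b ell x k))
       mu i *: ((aff_pts A b ell x k)`_i - (aff_pts A b ell x k)`_K).
    rewrite hK hx1; congr (_ + _).
    rewrite -(big_mkord xpredT (fun i => mu i *: ((aff_pts A b ell x k)`_i - x k))).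
    rewrite size_pts !big_nat_recr // nth_ptsl hK subrr scaler0 /= addr0.
    rewrite {2}/mu insubF ?ltnNge ?leqnSn // eqxx hMsplit; congr (_ + _).
      rewrite Vsum big_mkord; apply: eq_bigr => t _.
      by rewrite /mu valK nth_pts // ltnW.
    by rewrite {1}[dsubmx s]mx11_scalar mul_mx_scalar.
  by apply: aff_of; rewrite size_pts.
  move=> xi hxi; apply: (aff_min (z := x k)) hxi.
  - move=> i; rewrite size_pts ltnS leq_eqVlt => /orP [/eqP ->|hi].
      by rewrite nth_ptsl -/d /dot hde1 mxE.
    rewrite nth_pts; last exact: hi.
    apply: hcol; rewrite leq_addr /=.
    by rewrite -{2}(jkK k) leq_add2l; exact: hi.
  - by rewrite {1}hx1 addrC addKr hMs.
rewrite -(sqnN (x k - xstar)) -(sqnN (x k.+1 - xstar)) !opprB.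
have -> : xstar - x k = (xstar - x k.+1) + M *m s by rewrite he1 subrK.
rewrite sqnD (dotC (xstar - x k.+1)) hMs mul0rn addr0 addrAC subrr add0r.
rewrite sqnE dot_mul mulmxA -/G hsG.
rewrite -{1}[s]vsubmxK dot_colmx dot0r add0r dot11 [g%:M 0 0]mxE eqxx mulr1n.
have hGb : G = block_mx (V^T *m V) (V^T *m d) (d^T *m V) (d^T *m d).
  by rewrite /G hM tr_row_mx mul_col_row.
have hAA : V^T *m V \in unitmx := gram_unit hV.
set s1 := usubmx s; set s2 := dsubmx s.
have [e1 e2] : V^T *m V *m s1 + V^T *m d *m s2 = 0 /\
               d^T *m V *m s1 + d^T *m d *m s2 = g%:M.
  by apply: eq_col_mx; rewrite -mul_block_col -hGb vsubmxK hsG.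
have hs1 : s1 = - (invmx (V^T *m V) *m (V^T *m d *m s2)).
  have h : V^T *m V *m s1 = - (V^T *m d *m s2) by apply/eqP; rewrite -addr_eq0 e1.
  by rewrite -(mulKmx hAA s1) h mulmxN.
set S := d^T *m d - d^T *m V *m invmx (V^T *m V) *m (V^T *m d).
have hS : S *m s2 = g%:M.
  by rewrite -e2 hs1 /S mulmxBl mulmxN !mulmxA addrC.
have hS00 : S 0 0 * s2 0 0 = g.
  have := congr1 (fun M : 'cV[R]_1 => M 0 0) hS.
  by rewrite /= [g%:M 0 0]mxE eqxx mulr1n mxE big_ord1.
have hdet : \det G = \det (V^T *m V) * S 0 0 by rewrite hGb schur // det_mx11.
have hdG : \det G != 0 by rewrite -unitfE -unitmxE.
move: hdG; rewrite hdet mulf_eq0 negb_or => /andP [hA0 hS0].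
rewrite -hS00; field.
by rewrite hA0 hS0.
Qed.

Definition Q1 k := forall i j, (i <= k)%N -> (jk ell i.-1 <= j <= i)%N ->
  dot (x j - x i) (xstar - x i) = 0.
Definition Q2 k := forall i, (i < k)%N -> x i.+1 != x i.

Lemma hyps_of k : Q1 k -> Q2 k ->
  (forall c : 'cV[R]_(k - jk ell k), Vk ell x k *m c = 0 -> c = 0) /\
  (Vk ell x k)^T *m (xstar - x k) = 0.
Proof.
move=> q1 q2; split; last first.
  apply/matrixP => c j; rewrite ord1 dot_col colV mxE; apply: q1 => //.
  rewrite (leq_trans (jk_mono (leq_pred k)) (leq_addr _ _)) /=.
  by apply: ltnW; rewrite -[X in (_ < X)%N](jkK k) ltn_add2l.
move=> c; rewrite Vsum => hc.
apply: (@indep R n (k - jk ell k) (fun t => x (jk ell k + t)%N)).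
- move=> p q /andP [hpq hqK].
  have hQk : (jk ell k + q < k)%N by rewrite -{2}(jkK k) ltn_add2l.
  have hjP : forall i, (i <= (jk ell k + q).+1)%N -> (jk ell i.-1 <= jk ell k + p)%N.
    move=> i hi; apply: (leq_trans (jk_mono (i:=i.-1) (k:=k) _)); last exact: leq_addr.
    case: i hi => [|i] hi /=; first exact: leq0n.
    by move: hi; rewrite ltnS => hi; exact: leq_trans hi (ltnW hQk).
  rewrite !addnS.
  set P := (jk ell k + p)%N; set Q := (jk ell k + q)%N.
  have hPQ : (P < Q)%N by rewrite ltn_add2l.
  have -> : x Q - x Q.+1 = (xstar - x Q.+1) - (xstar - x Q).
    by rewrite opprB [RHS]addrC addrA subrK.
  have e1 : forall i, (i <= k)%N -> (P < i)%N -> (i <= Q.+1)%N ->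
      dot (x P - x P.+1) (xstar - x i) = 0.
    move=> i hik hPi hiQ.
    have -> : x P - x P.+1 = (x P - x i) - (x P.+1 - x i) by rewrite opprB addrA subrK.
    have hj1 := hjP i hiQ.
    have h1 : (jk ell i.-1 <= P <= i)%N by rewrite hj1 ltnW.
    have h2 : (jk ell i.-1 <= P.+1 <= i)%N by rewrite (leq_trans hj1 (leqnSn P)) hPi.
    by rewrite dotBl (q1 _ _ hik h1) (q1 _ _ hik h2) subrr.
  by rewrite dotBr (e1 Q.+1 hQk (leqW hPQ) (leqnn _)) (e1 Q (ltnW hQk) hPQ (leqnSn _)) subrr.
- move=> q hq; rewrite addnS eq_sym; apply: q2.
  by rewrite -{2}(jkK k) ltn_add2l.
- by rewrite jkK.
Qed.

Lemma inv k : (forall i, (i < k)%N -> deltak A b x i != 0) -> Q1 k /\ Q2 k.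
Proof.
elim: k => [_|k IH hd].
  split => // i j; rewrite leqn0 => /eqP -> /andP [_]; rewrite leqn0 => /eqP ->.
  by rewrite subrr dot0l.
have [q1 q2] := IH (fun i hi => hd i (leqW hi)).
have [hV hVe] := hyps_of q1 q2.
have [_ [hneq [hj _]]] := step (hd k (ltnSn k)) hV hVe.
split.
  move=> i j; rewrite leq_eqVlt => /orP [/eqP ->|hi]; first exact: hj.
  exact: q1.
by move=> i; rewrite ltnS leq_eqVlt => /orP [/eqP ->|]; [exact: hneq | exact: q2].
Qed.

End Main.

Theorem theorem10 (R : rcfType) (m n : nat) (A : 'M[R]_(m, n)) (b : 'cV[R]_m)
  (ell : nat) (x0 xstar : 'cV[R]_n) (x : nat -> 'cV[R]_n) :
  (forall j : 'I_m, row j A != 0) ->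
  (exists z : 'cV[R]_n, A *m z = b) ->
  (0 < ell)%N ->
  x 0%N = x0 ->
  (forall k : nat, x k.+1 = next_iter A b ell x k) ->
  A *m xstar = b ->
  forall k : nat,
    (* the iteration has not terminated before step k *)
    (forall i : nat, (i < k)%N -> deltak A b x i != 0) ->
    (* termination at step k returns a solution *)
    (deltak A b x k = 0 -> A *m x k = b) /\
    (* otherwise step k is well defined and has the stated properties *)
    (deltak A b x k != 0 ->
       ((Mk A b ell x k)^T *m Mk A b ell x k \in unitmx) /\
       in_aff (aff_pts A b ell x k) (x k.+1) /\
       (forall xi : 'cV[R]_n, in_aff (aff_pts A b ell x k) xi ->
          sqn (x k.+1 - xstar) <= sqn (xi - xstar)) /\
       sqn (x k - xstar) - sqn (x k.+1 - xstar)
         = gammak A b x k ^+ 2 * \det ((Vk ell x k)^T *m Vk ell x k)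
             / \det ((Mk A b ell x k)^T *m Mk A b ell x k) /\
       sqn (x k.+1 - xstar) <= sqn (kaczP A b (x k) - xstar)).
Proof.
move=> hrow _ _ _ hx hA k hd; split.
  by move=> h; apply: (term_sol hrow hA).
move=> hdk.
have [q1 q2] := inv hrow hA hx hd.
have [hV hVe] := hyps_of q1 q2.
have [hG [_ [_ [[haff hmin] hdet]]]] := step hrow hA hx hdk hV hVe.
do 4 (split => //).
apply: hmin.
have hp : ((k - jk ell k).+1 < size (aff_pts A b ell x k))%N by rewrite size_pts.
have := @aff_of R n (aff_pts A b ell x k) _ (fun _ => 0) hp.
by rewrite nth_ptsl big1 ?addr0 // => i _; rewrite scale0r.
Qed.
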